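(* For every prime $p\ge3$, the polynomials $P_{1,p}(z)=\sum_{n=0}^{p-1}\left(\binom{2n}{n}^2\bmod p\right)z^n$ and $P_{2,p}(z)=\sum_{n=0}^{p-1}\left(\frac{-1}{2n-1}\binom{2n}{n}^2\bmod p\right)z^n$ in $\mathbb{F}_p[z]$ are coprime.
   Context: The coefficients $\frac{-1}{2n-1}\binom{2n}{n}^2$ are integers, so their reduction mod $p$ makes sense. *)

(* Defs.v *)
From mathcomp Require Import all_boot all_order all_algebra.
Set Implicit Arguments. Unset Strict Implicit. Unset Printing Implicit Defensive.
Import GRing.Theory Num.Theory.
Local Open Scope ring_scope.

Definition c1 (n : nat) : int := ('C(n.*2, n) ^ 2)%N%:Z.

(* Integer coefficient -1/(2n-1) * binom(2n,n)^2 ; the division is exact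
   (the paper notes these are integers), computed by intdiv's divz. *)
Definition c2 (n : nat) : int :=
  ((- c1 n) %/ ((n.*2)%:Z - 1))%Z.

Definition P1 (p : nat) : {poly 'F_p} := \poly_(n < p) (c1 n)%:~R.
Definition P2 (p : nat) : {poly 'F_p} := \poly_(n < p) (c2 n)%:~R.

Definition c2_exact (n : nat) : Prop :=
  (((n.*2)%:Z - 1) %| c1 n)%Z.
Lemma c2_check : [seq c2 n | n <- iota 0 5] = [:: 1; -4; -12; -80; -700]%Z.
Proof. by vm_compute. Qed.

(* Main.v *)
Require Import Defs.
From mathcomp Require Import all_boot all_order all_algebra.
From mathcomp Require Import ring zify.
Set Implicit Arguments. Unset Strict Implicit.
Import GRing.Theory. Local Open Scope ring_scope.

Lemma PoszR (R : pzRingType) k : ((Posz k)%:~R : R) = k%:R.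
Proof. by []. Qed.

Lemma bin_rec n : (n.+1 * 'C(n.+1.*2, n.+1) = 2 * (2 * n + 1) * 'C(n.*2, n))%N.
Proof.
have h1 := mul_bin_diag (n.*2.+2) n.
have h2 := mul_bin_diag (n.*2.+1) n.
have h3 : 'C(n.*2.+1, n.+1) = 'C(n.*2.+1, n).
  have e : (n.*2.+1 - n.+1 = n)%N by lia.
  rewrite -[X in _ = 'C(_, X)]e bin_sub //.
  by rewrite ltnS -addnn leq_addr.
rewrite -[n.+1.*2]/(n.*2.+2) -h1 -[n.*2.+2.-1]/(n.*2.+1).
rewrite -[n.*2.+1.-1]/(n.*2) h3 in h2.
rewrite (_ : (2 * n + 1 = n.*2.+1)%N); last by rewrite -mul2n addn1.
rewrite -[n.*2.+2]/((n.+1).*2) -mul2n -!mulnA h2.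
by [].
Qed.


Lemma wS n : ((n.+1)^2 * ('C(n.+1.*2, n.+1) ^ 2) = 4 * (2 * n + 1) ^ 2 * 'C(n.*2, n) ^ 2)%N.
Proof. by rewrite -expnMn bin_rec !expnMn. Qed.

Lemma dvd_c1 n : (((n.+1).*2%:Z - 1) %| c1 n.+1)%Z.
Proof.
rewrite (_ : (n.+1).*2%:Z - 1 = (2 * n + 1)%N%:Z); last by rewrite doubleS -addn1; lia.
rewrite /c1 dvdzE /= expnS.
apply: dvdn_mulr.
have cop : coprime (2 * n + 1) n.+1.
  rewrite coprime_sym /coprime (_ : (2 * n + 1 = n.+1 + n)%N); last lia.
  rewrite gcdnDl; exact: coprimeSn.
rewrite -(Gauss_dvdr _ cop) bin_rec.
by apply: dvdn_mulr; apply: dvdn_mull.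
Qed.

Lemma c2S n : c2 n.+1 = c1 n.+1 * (2 * n + 3)%N%:Z - c1 n * (16 * (2 * n + 1))%N%:Z.
Proof.
have d := dvd_c1 n.
have E1 : c2 n.+1 * ((n.+1).*2%:Z - 1) = - c1 n.+1.
  by rewrite /c2 divzK // rpredN.
have E2 : ((n.+1)^2)%N%:Z * c1 n.+1 = (4 * (2 * n + 1) ^ 2)%N%:Z * c1 n.
  by rewrite /c1 -!PoszM wS.
have nz : (n.+1).*2%:Z - 1 != 0.
  rewrite subr_eq0; apply/eqP => /eqP; rewrite -[1]/(1%N%:Z) eqz_nat doubleS //.
apply: (mulIf nz); rewrite E1.
move: E2; rewrite -!natz -mul2n.
set a := c1 n.+1; set b := c1 n => E2.
rewrite (_ : (a * (2 * n + 3)%:R - b * (16 * (2 * n + 1))%:R) * ((2 * n.+1)%:R - 1)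
   = a * (2 * n + 3)%:R * (2 * n + 1)%:R - 4%:R * ((4 * (2 * n + 1) ^ 2)%:R * b)); last by ring.
rewrite -E2; ring.
Qed.

Definition AA (R : fieldType) : {poly R} := 'X * (1 - 'X *+ 16).
Definition BB (R : fieldType) : {poly R} := 1 - 'X *+ 32.
Definition Qk (R : fieldType) (y : {poly R}) k : {poly R} :=
  AA R * y^`(k.+2) + (BB R * y^`(k.+1)) *+ k.+1 - y^`(k) *+ (4 * (2 * k + 1) ^ 2).

Lemma d1 (R : fieldType) : (1 : {poly R})^`() = 0.
Proof. by rewrite -polyC1 derivC. Qed.
Lemma dAA (R : fieldType) : (AA R)^`() = BB R.
Proof. rewrite /AA /BB derivM derivB derivMn derivX d1. ring. Qed.
Lemma dBB (R : fieldType) : (BB R)^`() = - (1 *+ 32).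
Proof. rewrite /BB derivB derivMn derivX d1. ring. Qed.

Lemma Qk_deriv (R : fieldType) (y : {poly R}) k : (Qk y k)^`() = Qk y k.+1.
Proof.
rewrite /Qk !derivnS; set z := y^`(k).
rewrite !derivB !derivD !derivMn !derivM.
rewrite /AA /BB !derivB !derivMn derivX d1.
ring.
Qed.

Lemma Qk0 (R : fieldType) (y : {poly R}) : Qk y 0 = 0 -> forall k, Qk y k = 0.
Proof. move=> H; elim=> [//|k IH]; by rewrite -Qk_deriv IH deriv0. Qed.

Lemma ff2 n : (n.+2 ^_ 2 = n.+2 * n.+1)%N.
Proof. by rewrite !ffactnS ffactn0 muln1. Qed.

Lemma Qk0_coef (R : fieldType) (y : {poly R}) :
  (forall i, y`_(i.+1) *+ (i.+1)^2 = y`_i *+ (4*(2*i+1)^2)) -> Qk y 0 = 0.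
Proof.
move=> H; rewrite /Qk derivn1 derivn0.
have -> : AA R * y^`(2) + BB R * y^`() *+ 1 - y *+ (4 * (2 * 0 + 1) ^ 2) =
  'X * y^`(2) - ('X * ('X * y^`(2))) *+ 16 + y^`() - ('X * y^`()) *+ 32 - y *+ 4.
  rewrite /AA /BB; ring.
apply/polyP => i; rewrite coef0 !coefD !coefN !coefMn !coefXM !coef_derivn !coef_deriv.
case: i => [|i] /=.
  have E := H 0%N.
  rewrite (_ : _ - _ = y`_1 *+ 1 ^ 2 - y`_0 *+ (4 * (2 * 0 + 1) ^ 2)); first by rewrite E subrr.
  ring.
have E := H i.+1.
rewrite (_ : _ - _ = y`_i.+2 *+ i.+2 ^ 2 - y`_i.+1 *+ (4 * (2 * i.+1 + 1) ^ 2)); first by rewrite E subrr.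
rewrite -[(2 + i)%N]/(i.+2) ff2.
case: i {E} => [|i]; first by rewrite eqxx; ring.
rewrite -[i.+1 == 0%N]/false -[i.+1.-1]/i -[(2 + i)%N]/(i.+2) ff2. ring.
Qed.

Lemma Qk_step (F : fieldType) (y : {poly F}) k : Qk y 0 = 0 ->
  AA F * y^`(k.+2) + (BB F * y^`(k.+1)) *+ k.+1 = y^`(k) *+ (4 * (2 * k + 1) ^ 2).
Proof. move=> H; apply/eqP; rewrite -subr_eq0; apply/eqP; exact: Qk0. Qed.

Lemma dvdp_mulrn (F : fieldType) (h q : {poly F}) n : h %| q -> h %| q *+ n.
Proof. by move=> H; rewrite -mulr_natl dvdp_mull. Qed.

Lemma sing_ind (F : fieldType) (y h : {poly F}) :
  h %| AA F -> coprimep h (BB F) -> h %| y -> Qk y 0 = 0 ->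
  (forall k, (k < (size y).-1)%N -> (k.+1)%:R != 0 :> F) ->
  forall k, (k <= (size y).-1)%N -> h %| y^`(k).
Proof.
move=> hA hB hy H0 Hn; elim=> [|k IH] Hk; first by rewrite derivn0.
have IH' := IH (ltnW Hk).
have E := Qk_step k H0.
have : h %| (BB F * y^`(k.+1)) *+ k.+1.
  rewrite (_ : _ *+ k.+1 = y^`(k) *+ (4 * (2 * k + 1) ^ 2) - AA F * y^`(k.+2)).
    by apply: dvdp_sub; [exact: dvdp_mulrn | exact: dvdp_mulr].
  by rewrite -E addrC addKr.
by rewrite -scaler_nat dvdpZr ?(Hn _ Hk) // Gauss_dvdpr.
Qed.

Lemma reg_ind (F : fieldType) (y g : {poly F}) :
  coprimep g (AA F) -> g %| y -> g %| y^`() -> Qk y 0 = 0 ->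
  forall k, g %| y^`(k) /\ g %| y^`(k.+1).
Proof.
move=> gA gy gy' H0; elim=> [|k [IH1 IH2]]; first by rewrite derivn0 derivn1.
split=> //.
have E := Qk_step k H0.
have : g %| AA F * y^`(k.+2).
  rewrite (_ : _ * _ = y^`(k) *+ (4 * (2 * k + 1) ^ 2) - (BB F * y^`(k.+1)) *+ k.+1).
    by apply: dvdp_sub; apply: dvdp_mulrn => //; exact: dvdp_mull.
  by rewrite -E addrK.
by rewrite Gauss_dvdpr.
Qed.

Lemma final_step (F : fieldType) (y h : {poly F}) : y != 0 ->
  ((size y).-1`!)%:R != 0 :> F -> h %| y^`((size y).-1) -> size h == 1%N.
Proof.
move=> y0 f0 hd.
set d := (size y).-1 in f0 hd.
have Ed : y^`(d) = (lead_coef y *+ d`!)%:P.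
  apply/polyP=> i; rewrite coefC coef_derivn; case: i => [|i] /=.
    by rewrite addn0 ffactnn lead_coefE.
  rewrite nth_default ?mul0rn //.
  rewrite /d; case: (size y) => // s /=; rewrite addnS ltnS leq_addr //.
rewrite Ed in hd.
have c0 : lead_coef y *+ d`! != 0.
  by rewrite -mulr_natr mulf_neq0 // lead_coef_eq0.
have hn0 : h != 0.
  by apply: contraNneq c0 => h0; move: hd; rewrite h0 dvd0p polyC_eq0.
have := dvdp_leq _ hd; rewrite polyC_eq0 size_polyC c0 => /(_ isT) hs.
by rewrite eqn_leq hs lt0n size_poly_eq0 hn0.
Qed.


Lemma Fp_nat_neq0 p n : prime p -> ~~ (p %| n)%N -> (n%:R : 'F_p) != 0.
Proof.
move=> pp nd; apply/eqP => h.
have : (n%:R : 'F_p) = 0%:R by rewrite h.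
move/(congr1 (@nat_of_ord _)); rewrite !val_Fp_nat // mod0n => /eqP.
by apply/negP.
Qed.

Lemma ndvd_small p m : (0 < m < p)%N -> ~~ (p %| m)%N.
Proof. case/andP=> m0 mp; apply/negP => /(dvdn_leq m0); rewrite leqNgt mp. done. Qed.

Lemma fact_ndvd p d : prime p -> (d < p)%N -> ~~ (p %| d`!)%N.
Proof.
move=> pp; elim: d => [|d IH] Hd.
  by rewrite fact0 dvdn1; apply/negP => /eqP p1; rewrite p1 in pp.
rewrite factS Euclid_dvdM // negb_or IH ?(ltnW Hd) // andbT.
by apply: ndvd_small; rewrite Hd.
Qed.

Definition u p i : 'F_p := ('C(i.*2, i) ^ 2)%N%:R.

Lemma P1_coef p i : (P1 p)`_i = if (i < p)%N then u p i else 0.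
Proof. by rewrite /P1 coef_poly /c1 PoszR. Qed.

Lemma u_rec p i : u p i.+1 *+ (i.+1)^2 = u p i *+ (4 * (2 * i + 1) ^ 2).
Proof.
rewrite /u -[X in X = _]mulr_natr -[X in _ = X]mulr_natr -!natrM.
by rewrite (mulnC _ ((i.+1)^2)%N) (wS i) (mulnC ('C(i.*2, i) ^ 2)%N).
Qed.

Lemma u_last p : prime p -> (2 < p)%N -> u p p.-1 = 0.
Proof.
move=> pp p2.
have nz : (((4 * (2 * p.-1 + 1) ^ 2)%N)%:R : 'F_p) != 0.
  apply: Fp_nat_neq0 => //.
  rewrite Euclid_dvdM // Euclid_dvdX // negb_or andbT; apply/andP; split.
    rewrite (_ : 4 = 2 * 2)%N // Euclid_dvdM // orbb; apply: ndvd_small; by rewrite /= p2.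
  rewrite (_ : (2 * p.-1 + 1 = p + p.-1)%N); last by lia.
  rewrite dvdn_addr // ; apply: ndvd_small; lia.
have := u_rec p p.-1; rewrite prednK ?(ltnW (ltnW p2)) //.
rewrite -mulr_natr natrX pchar_Fp_0 // expr0n /= mulr0 -mulr_natr => /esym /eqP.
by rewrite mulf_eq0 (negbTE nz) orbF => /eqP.
Qed.

Lemma ytop p i : prime p -> (2 < p)%N -> (p <= i.+1)%N -> (P1 p)`_i = 0.
Proof.
move=> pp p2 h; rewrite P1_coef; case: ltnP => // h'.
have -> : i = p.-1 by lia.
exact: u_last.
Qed.

Lemma P1_rec p : prime p -> (2 < p)%N -> forall i,
  (P1 p)`_(i.+1) *+ (i.+1)^2 = (P1 p)`_i *+ (4 * (2 * i + 1) ^ 2).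
Proof.
move=> pp p2 i; case: (ltnP i.+1 p) => h.
  rewrite !P1_coef h (ltnW h); exact: u_rec.
by rewrite (ytop pp p2 h) (@ytop p i.+1 pp p2) ?mul0rn // (leq_trans h).
Qed.

Lemma coefXd (F : fieldType) (y : {poly F}) i : ('X * y^`())`_i = y`_i *+ i.
Proof. rewrite coefXM; case: i => [|i]; first by rewrite mulr0n. by rewrite coef_deriv. Qed.

Lemma c2_0 : c2 0 = 1.
Proof. by []. Qed.

Lemma P2_rel p : prime p -> (2 < p)%N ->
  P2 p = (1 - 'X *+ 16) * (P1 p + ('X * (P1 p)^`()) *+ 2).
Proof.
move=> pp p2; set y := P1 p.
rewrite (_ : (1 - 'X *+ 16) * (y + ('X * y^`()) *+ 2) =
   (y + ('X * y^`()) *+ 2) - ('X * (y + ('X * y^`()) *+ 2)) *+ 16); last by ring.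
apply/polyP => i.
rewrite coefB coefMn coefXM !coefD ?coefMn !coefXd.
case: i => [|i].
  rewrite /P2 coef_poly (ltnW (ltnW p2)) c2_0 /y P1_coef (ltnW (ltnW p2)) /u.
  by rewrite mulr0n mul0rn addr0 subr0 addr0.
rewrite -[i.+1 == 0%N]/false -[i.+1.-1]/i.
case: (ltnP i.+1 p) => h.
  rewrite /P2 coef_poly h c2S intrB !intrM /c1 -!pmulrn /y !P1_coef h (ltnW h) /u.
  ring.
rewrite /P2 coef_poly ltnNge h /= /y (ytop pp p2 h) (@ytop p i.+1 pp p2) ?(leq_trans h) //.
by rewrite !(mul0rn, addr0, subr0).
Qed.

Theorem mainTheorem16 (p : nat) : prime p -> (3 <= p)%N ->
  coprimep (P1 p) (P2 p).
Proof.
move=> pp p2.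
set y := P1 p.
have y0 : y != 0.
  apply/eqP => H; have := P1_coef p 0; rewrite -/y H coef0 (ltnW (ltnW p2)) /u.
  by move/esym/eqP; rewrite oner_eq0.
have sz : (size y <= p)%N by apply: size_poly.
have dlt : ((size y).-1 < p)%N by lia.
have Hf : ((((size y).-1)`!)%:R : 'F_p) != 0.
  by apply: Fp_nat_neq0 => //; apply: fact_ndvd.
have Hn : forall k, (k < (size y).-1)%N -> ((k.+1)%:R : 'F_p) != 0.
  by move=> k hk; apply: Fp_nat_neq0 => //; apply: ndvd_small; lia.
have H0 : Qk y 0 = 0 by apply: Qk0_coef; exact: P1_rec.
have nz2 : (2%:R : 'F_p) != 0.
  by apply: Fp_nat_neq0 => //; apply: ndvd_small; lia.
set g := gcdp y (P2 p).
have gy : g %| y := dvdp_gcdl _ _.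
have g2 : g %| P2 p := dvdp_gcdr _ _.
have copXB : coprimep 'X (BB 'F_p).
  apply/Bezout_coprimepP; exists ((1 : {poly 'F_p}) *+ 32, 1) => /=.
  by rewrite /BB (_ : _ + _ = 1) ?eqpxx //; ring.
have copLB : coprimep (1 - 'X *+ 16) (BB 'F_p).
  apply/Bezout_coprimepP; exists ((1 : {poly 'F_p}) *+ 2, -1) => /=.
  by rewrite /BB (_ : _ + _ = 1) ?eqpxx //; ring.
have gX : coprimep g 'X.
  rewrite coprimep_def; set h := gcdp g 'X.
  apply: (final_step y0 Hf).
  apply: (sing_ind _ _ _ H0 Hn) => //.
  - by rewrite /AA; apply: dvdp_mulr; exact: dvdp_gcdr.
  - by rewrite coprimep_sym; apply: (coprimep_dvdl (dvdp_gcdr _ _)); rewrite coprimep_sym.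
  - exact: dvdp_trans (dvdp_gcdl _ _) gy.
have gL : coprimep g (1 - 'X *+ 16).
  rewrite coprimep_def; set h := gcdp g _.
  apply: (final_step y0 Hf).
  apply: (sing_ind _ _ _ H0 Hn) => //.
  - by rewrite /AA; apply: dvdp_mull; exact: dvdp_gcdr.
  - by rewrite coprimep_sym; apply: (coprimep_dvdl (dvdp_gcdr _ _)); rewrite coprimep_sym.
  - exact: dvdp_trans (dvdp_gcdl _ _) gy.
have gA : coprimep g (AA 'F_p) by rewrite /AA coprimepMr gX gL.
have gy' : g %| y^`().
  have : g %| (AA 'F_p * y^`()) *+ 2.
    rewrite (_ : _ *+ 2 = P2 p - (1 - 'X *+ 16) * y).
      by apply: dvdp_sub => //; exact: dvdp_mull.
    by rewrite (P2_rel pp p2) -/y /AA; ring.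
  by rewrite -scaler_nat dvdpZr // Gauss_dvdpr.
rewrite coprimep_def -/g.
apply: (final_step y0 Hf).
exact: (reg_ind gA gy gy' H0 _).1.
Qed.
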